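(* There exists a stability parameter $\theta\in\mathbb{R}^3$ with $\theta\cdot(2,6,2)=0$ such that every instanton representation of $\mathbf{Q}$ of charge $2$ is $\theta$-stable.
   Context: The quiver $\mathbf{Q}$ has vertices $-1,0,1$, arrows $\eta_0,\dots,\eta_3:-1\to0$, $\phi_0,\dots,\phi_3:0\to1$ and relations $\phi_i\eta_j+\phi_j\eta_i=0$; a representation consists of vector spaces $V_{-1},V_0,V_1$ and linear maps $f_i:V_{-1}\to V_0$, $g_i:V_0\to V_1$ with $g_if_j+g_jf_i=0$. $R$ is locally injective if $\sum\lambda_if_i$ is injective for all $[\lambda]\in\mathbb{P}^3$ outside a closed subset of codimension at least 2; globally surjective if $\sum\lambda_ig_i$ is surjective for all $\lambda\in\mathbb{C}^4\setminus\{0\}$. An instanton representation of charge $n$ is a locally injective, globally surjective representation with dimension vector $(n,2n+2,n)$. $R$ is $\theta$-stable if $\theta\cdot\dim R=0$ and $\theta\cdot\dim S<0$ for every nonzero proper subrepresentation $S$. *)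

(* Defs.v *)
From HB Require Import structures.
From mathcomp Require Import all_boot all_order all_algebra.
From mathcomp Require Import reals.
From mathcomp Require Import complex.
From mathcomp Require Import mpoly.
Set Implicit Arguments.
Unset Strict Implicit.
Unset Printing Implicit Defensive.
Import Order.TTheory GRing.Theory Num.Theory.
Local Open Scope ring_scope.

Section Defs.
Variable R : realType.
Local Notation C := (R[i]).

(* Projective space P^3 over C, seen as nonzero vectors of C^4; all   *)
(* subsets below are cones (defined by homogeneous polynomials), so   *)
(* they are exactly subsets of P^3.                                    *)
Definition pt := 'I_4 -> C.
Definition nonzero_pt (l : pt) : Prop := exists i, l i != 0.

Definition proj_closed (Z : pt -> Prop) : Prop :=
  exists S : {mpoly C[4]} -> Prop,
    (forall p, S p -> exists d, p \is d.-homog) /\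
    (forall l, Z l <-> (nonzero_pt l /\ forall p, S p -> p.@[l] = 0)).

Definition psubset (Y Z : pt -> Prop) : Prop := forall l, Y l -> Z l.
Definition pstrict (Y Z : pt -> Prop) : Prop :=
  psubset Y Z /\ exists l, Z l /\ ~ Y l.

Definition proj_irreducible (Y : pt -> Prop) : Prop :=
  [/\ proj_closed Y, (exists l, Y l) &
      forall A B, proj_closed A -> proj_closed B ->
        (forall l, Y l -> A l \/ B l) -> psubset Y A \/ psubset Y B].

(* Z has (Krull) dimension >= 2: a chain Y0 < Y1 < Y2 of irreducible closed
   subsets contained in Z *)
Definition proj_dim_ge2 (Z : pt -> Prop) : Prop :=
  exists Y0 Y1 Y2, [/\ proj_irreducible Y0, proj_irreducible Y1,
    proj_irreducible Y2 & [/\ pstrict Y0 Y1, pstrict Y1 Y2 & psubset Y2 Z]].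

(* codimension in P^3 (of dimension 3) at least 2, i.e. dim Z <= 1 *)
Definition proj_codim_ge2 (Z : pt -> Prop) : Prop := ~ proj_dim_ge2 Z.

(* Representations of Q with dimension vector (a, b, c), in           *)
(* coordinates: V_{-1} = C^a, V_0 = C^b, V_1 = C^c (row vectors);     *)
(* f_i : V_{-1} -> V_0 is  v |-> v *m f i,  g_i : V_0 -> V_1 is       *)
(* w |-> w *m g i, so  g_i o f_j  is the matrix  f j *m g i.           *)
Definition is_Qrep (a b c : nat) (f : 'I_4 -> 'M[C]_(a, b))
  (g : 'I_4 -> 'M[C]_(b, c)) : Prop :=
  forall i j : 'I_4, f j *m g i + f i *m g j = 0.

Definition lincomb (m k : nat) (l : pt) (h : 'I_4 -> 'M[C]_(m, k)) :
  'M[C]_(m, k) := \sum_(i < 4) l i *: h i.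

Definition locally_injective (a b : nat) (f : 'I_4 -> 'M[C]_(a, b)) : Prop :=
  exists Z, [/\ proj_closed Z, proj_codim_ge2 Z &
    forall l, nonzero_pt l -> ~ Z l ->
      injective (fun v : 'rV[C]_a => v *m lincomb l f)].

Definition globally_surjective (b c : nat) (g : 'I_4 -> 'M[C]_(b, c)) : Prop :=
  forall l, nonzero_pt l ->
    forall w : 'rV[C]_c, exists v : 'rV[C]_b, v *m lincomb l g = w.

Definition instanton_rep (n : nat) (f : 'I_4 -> 'M[C]_(n, (2 * n + 2)%N))
  (g : 'I_4 -> 'M[C]_((2 * n + 2)%N, n)) : Prop :=
  [/\ is_Qrep f g, locally_injective f & globally_surjective g].

(* subrepresentations: subspaces (row spaces of square matrices)
   S1 <= C^a, S0 <= C^b, S2 <= C^c stable under the maps *)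
Definition is_subrep (a b c : nat) (f : 'I_4 -> 'M[C]_(a, b))
  (g : 'I_4 -> 'M[C]_(b, c)) (S1 : 'M[C]_a) (S0 : 'M[C]_b) (S2 : 'M[C]_c) :
  Prop :=
  forall i : 'I_4, (S1 *m f i <= S0)%MS /\ (S0 *m g i <= S2)%MS.

(* theta . (d_{-1}, d_0, d_1) *)
Definition theta_dot (th : R * R * R) (d1 d0 d2 : nat) : R :=
  th.1.1 * d1%:R + th.1.2 * d0%:R + th.2 * d2%:R.

Definition theta_stable (th : R * R * R) (a b c : nat)
  (f : 'I_4 -> 'M[C]_(a, b)) (g : 'I_4 -> 'M[C]_(b, c)) : Prop :=
  theta_dot th a b c = 0 /\
  forall (S1 : 'M[C]_a) (S0 : 'M[C]_b) (S2 : 'M[C]_c),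
    is_subrep f g S1 S0 S2 ->
    (0 < \rank S1 \/ 0 < \rank S0 \/ 0 < \rank S2)%N ->
    (\rank S1 < a \/ \rank S0 < b \/ \rank S2 < c)%N ->
    theta_dot th (\rank S1) (\rank S0) (\rank S2) < 0.

End Defs.

(* Main.v *)
Require Import Defs.
From HB Require Import structures.
From mathcomp Require Import all_boot all_order all_algebra.
From mathcomp Require Import reals complex mpoly.
From Stdlib Require Import Classical.
From mathcomp Require Import zify.
From mathcomp Require Import ring lra.

Import Order.TTheory GRing.Theory Num.Theory.
Local Open Scope ring_scope.
Set Implicit Arguments. Unset Strict Implicit. Unset Printing Implicit Defensive.

Lemma rank_row_mx (F : fieldType) m n1 n2 (A : 'M[F]_(m,n1)) (B : 'M[F]_(m,n2)) :
  (\rank (row_mx A B) <= \rank A + \rank B)%N.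
Proof.
rewrite -mxrank_tr tr_row_mx -addsmxE -(mxrank_tr A) -(mxrank_tr B).
exact: mxrank_adds_leqif.
Qed.

Lemma arith1 (x y p z : nat) : (x <= y)%N -> (3 < p)%N -> (p <= z)%N -> (y + z)%N = 5%N -> (x <= 1)%N.
Proof. lia. Qed.

Lemma arith2 (a b c n r : nat) : (a <= 1)%N -> (b <= a)%N -> (c <= a)%N -> (n <= a + r)%N -> (r <= b + c)%N -> (n < 4)%N.
Proof. lia. Qed.

Lemma arith3 (b c d : nat) : (d <= 4)%N -> (c < d)%N -> (b < c)%N -> (1 < b)%N -> d = 4%N.
Proof. lia. Qed.

Lemma arith4 (a : nat) : (a <= 5)%N -> (4 < a)%N -> a = 5%N.
Proof. lia. Qed.

Lemma hankel (T : zmodType) (s : nat -> nat -> T) (h0 : forall x : T, x = - x -> x = 0)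
  (ha : forall i j, (i < 4)%N -> (j < 4)%N -> s i j = - s j i)
  (hb : forall i j, (i < 4)%N -> (j < 4)%N -> s i j.+1 = - s j i.+1) :
  forall i j, (i < 4)%N -> (j < 5)%N -> s i j = 0.
Proof.
have hk : forall i j, (i < 3)%N -> (j < 4)%N -> s i.+1 j = s i j.+1.
  move=> i j hi hj. rewrite (hb i j) ?(ha i.+1 j) ?opprK //; lia.
have d0 : s 0 0 = 0 by apply: h0; apply: ha.
have d1 : s 1 1 = 0 by apply: h0; apply: ha.
have d2 : s 2 2 = 0 by apply: h0; apply: ha.
have d3 : s 3 3 = 0 by apply: h0; apply: ha.
have o0 : s 0 1 = 0 by apply: h0; apply: hb.
have o1 : s 1 2 = 0 by apply: h0; apply: hb.
have o2 : s 2 3 = 0 by apply: h0; apply: hb.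
have o3 : s 3 4 = 0 by apply: h0; apply: hb.
have x10 : s 1 0 = 0 by rewrite hk.
have x02 : s 0 2 = 0 by rewrite -hk.
have x20 : s 2 0 = 0 by rewrite hk.
have x21 : s 2 1 = 0 by rewrite hk.
have x03 : s 0 3 = 0 by rewrite -hk.
have x30 : s 3 0 = 0 by rewrite hk.
have x13 : s 1 3 = 0 by rewrite -hk.
have x31 : s 3 1 = 0 by rewrite hk.
have x32 : s 3 2 = 0 by rewrite hk.
have x04 : s 0 4 = 0 by rewrite -hk.
have x14 : s 1 4 = 0 by rewrite -hk.
have x24 : s 2 4 = 0 by rewrite -hk.
move=> i j hi hj.
case: i hi => [|[|[|[|i]]]] // _; case: j hj => [|[|[|[|[|j]]]]] //.
Qed.

Section K.
Variable R : realType.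
Local Notation C := (R[i]).

Lemma exists_ker m n (A : 'M[C]_(m,n)) : (\rank A < m)%N ->
  exists u : 'rV_m, u != 0 /\ u *m A = 0.
Proof.
move=> lt; have : kermx A != 0.
  by rewrite -mxrank_eq0 mxrank_ker subn_eq0 -ltnNge.
case: (boolP [forall i, row i (kermx A) == 0]) => [/forallP H|].
  by case/negP; apply/eqP/row_matrixP => i; rewrite (eqP (H i)) row0.
rewrite negb_forall => /existsP[i Hi] _; exists (row i (kermx A)); split=> //.
by rewrite -row_mul mulmx_ker row0.
Qed.

Variables P1 P2 : 'M[C]_(4,6).
Hypothesis H1 : forall (x : 'rV_4) (a b : C), x != 0 ->
  x *m (a *: P1 + b *: P2) = 0 -> (a == 0) && (b == 0).

Lemma P1free : row_free P1.
Proof.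
apply: inj_row_free => x Hx; apply/eqP; apply: contraT => x0.
have := @H1 x 1 0 x0; rewrite scale0r addr0 scale1r Hx => /(_ erefl).
by rewrite oner_eq0.
Qed.

Lemma Eig m (V : 'M[C]_(m,4)) : V != 0 -> (V *m P2 <= V *m P1)%MS -> False.
Proof.
move=> V0 sub.
pose Vb := row_base V.
have eqV : (Vb :=: V)%MS := eq_row_base V.
have subb : (Vb *m P2 <= Vb *m P1)%MS by rewrite (eqmxMr _ eqV) (eqmxMr _ eqV).
have [D HD] := submxP subb.
have r0 : (0 < \rank V)%N by rewrite lt0n mxrank_eq0.
have [a ea] := eigenvalue_closed D r0.
have [c cD c0] := eigenvalueP ea.
have x0 : c *m Vb != 0 by rewrite mulmx_free_eq0 ?row_base_free.
have := @H1 _ a (-1) x0.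
rewrite mulmxDr -!scalemxAr scaleN1r -[c *m Vb *m P2]mulmxA HD !mulmxA cD -!scalemxAl subrr.
by move=> /(_ erefl) /andP[_]; rewrite oppr_eq0 oner_eq0.
Qed.

Variable w : 'cV[C]_6.
Hypothesis w0 : w != 0.
Hypothesis P1w : P1 *m w = 0.
Hypothesis P2w : P2 *m w = 0.

Definition Rm := P2 *m pinvmx P1.

Lemma rank_P2cok : (\rank (P2 *m cokermx P1) <= 1)%N.
Proof.
pose K := kermx w.
have rK : \rank K = 5%N.
  have wT : w^T != 0 by rewrite trmx_eq0.
  by rewrite mxrank_ker -mxrank_tr rank_rV wT.
have P2K : (P2 <= K)%MS by rewrite /K sub_kermx P2w.
have P1K : (P1 <= K :&: kermx (cokermx P1))%MS.
  by rewrite /K sub_capmx !sub_kermx P1w mulmx_coker !eqxx.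
have := mxrank_mul_ker K (cokermx P1); rewrite rK.
have := mxrankS P1K; have := P1free; rewrite -row_leq_rank.
have := mxrankS (submxMr (cokermx P1) P2K).
exact: arith1.
Qed.

Lemma chain_exists : exists phi : 'rV_4, phi != 0 /\
  (phi *m P2 <= P1)%MS /\ (phi *m Rm *m P2 <= P1)%MS /\ (phi *m Rm *m Rm *m P2 <= P1)%MS.
Proof.
pose N3 := row_mx (P2 *m cokermx P1) (row_mx (Rm *m P2 *m cokermx P1) (Rm *m Rm *m P2 *m cokermx P1)).
have rN : (\rank N3 < 4)%N.
  have h1 := rank_P2cok.
  have h2 : (\rank (Rm *m P2 *m cokermx P1) <= \rank (P2 *m cokermx P1))%N.
    by rewrite -mulmxA; exact: mxrankM_maxr.
  have h3 : (\rank (Rm *m Rm *m P2 *m cokermx P1) <= \rank (P2 *m cokermx P1))%N.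
    by rewrite -mulmxA; exact: mxrankM_maxr.
  have h4 := rank_row_mx (P2 *m cokermx P1) (row_mx (Rm *m P2 *m cokermx P1) (Rm *m Rm *m P2 *m cokermx P1)).
  have h5 := rank_row_mx (Rm *m P2 *m cokermx P1) (Rm *m Rm *m P2 *m cokermx P1).
  exact: (arith2 h1 h2 h3 h4 h5).
have [phi [phi0 hN]] := exists_ker rN.
exists phi; split=> //.
move: hN; rewrite /N3 !mul_mx_row -[0 : 'M_(1, _)]row_mx0.
case/eq_row_mx => h1; rewrite -[0 : 'M_(1, _)]row_mx0; case/eq_row_mx => h2 h3.
have e1 : phi *m P2 *m cokermx P1 = phi *m (P2 *m cokermx P1) by rewrite !mulmxA.
have e2 : phi *m Rm *m P2 *m cokermx P1 = phi *m (Rm *m P2 *m cokermx P1) by rewrite !mulmxA.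
have e3 : phi *m Rm *m Rm *m P2 *m cokermx P1 = phi *m (Rm *m Rm *m P2 *m cokermx P1) by rewrite !mulmxA.
by rewrite !submxE e1 e2 e3 h1 h2 h3 !eqxx.
Qed.

Lemma chain_rel (phi : 'rV[C]_4) : (phi *m P2 <= P1)%MS -> phi *m P2 = phi *m Rm *m P1.
Proof. by move=> h; rewrite /Rm mulmxA (mulmxKpV h). Qed.

Lemma Eig' (phi : 'rV_4) m (V : 'M[C]_(m,4)) : phi != 0 -> (phi <= V)%MS ->
  (V *m P2 <= V *m P1)%MS -> False.
Proof.
move=> p0 pV; apply: Eig; apply: contraNneq p0 => V0.
by move: pV; rewrite V0 => /submx0null ->.
Qed.

Lemma rank_step m1 m2 n (A : 'M[C]_(m1,n)) (B : 'M[C]_(m2,n)) :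
  ~~ (B <= A)%MS -> (\rank A < \rank (A + B)%MS)%N.
Proof. by move=> nB; apply: rank_ltmx; rewrite ltmxE addsmxSl /= addsmx_sub submx_refl /= nB. Qed.

Lemma K_span : exists (f1 f2 f3 f4 : 'rV_4),
  [/\ f1 *m P2 = f2 *m P1, f2 *m P2 = f3 *m P1, f3 *m P2 = f4 *m P1,
      row_full (f1 + f2 + f3 + f4)%MS &
      forall z : 'rV_6, z *m w = 0 ->
        (z <= (f1 + f2 + f3 + f4)%MS *m P1 + f4 *m P2)%MS].
Proof.
have [f1 [f10 [c1 [c2 c3]]]] := chain_exists.
pose f2 := f1 *m Rm; pose f3 := f2 *m Rm; pose f4 := f3 *m Rm.
have r1 : f1 *m P2 = f2 *m P1 by apply: chain_rel.
have r2 : f2 *m P2 = f3 *m P1 by apply: chain_rel.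
have r3 : f3 *m P2 = f4 *m P1 by apply: chain_rel.
exists f1, f2, f3, f4.
have s12 : (f2 <= f1 + f2)%MS by exact: addsmxSr.
have s13 : (f2 <= f1 + f2 + f3)%MS by apply: submx_trans (addsmxSl _ _).
have s23 : (f3 <= f1 + f2 + f3)%MS by exact: addsmxSr.
have s14 : (f2 <= f1 + f2 + f3 + f4)%MS by apply: submx_trans (addsmxSl _ _).
have s24 : (f3 <= f1 + f2 + f3 + f4)%MS by apply: submx_trans (addsmxSl _ _).
have s34 : (f4 <= f1 + f2 + f3 + f4)%MS by exact: addsmxSr.
have t1 : (f1 <= f1 + f2 + f3 + f4)%MS.
  by apply: submx_trans (addsmxSl _ _); apply: submx_trans (addsmxSl _ _); exact: addsmxSl.
have n2 : ~~ (f2 <= f1)%MS.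
  apply/negP => h; apply: (Eig' f10 (submx_refl f1)).
  by rewrite r1 submxMr.
have n3 : ~~ (f3 <= f1 + f2)%MS.
  apply/negP => h; apply: (Eig' f10 (addsmxSl f1 f2)).
  by rewrite (addsmxMr _ _ P2) addsmx_sub r1 r2 !submxMr ?addsmxSr.
have n4 : ~~ (f4 <= f1 + f2 + f3)%MS.
  apply/negP => h; apply: (Eig' f10 (submx_trans (addsmxSl f1 f2) (addsmxSl _ f3))).
  by rewrite (addsmxMr (f1 + f2)%MS f3 P2) addsmx_sub (addsmxMr f1 f2 P2) !addsmx_sub r1 r2 r3 !submxMr.
have n5 : ~~ (f4 *m P2 <= (f1 + f2 + f3 + f4)%MS *m P1)%MS.
  apply/negP => h; apply: (Eig' f10 t1).
  by rewrite (addsmxMr (f1 + f2 + f3)%MS f4 P2) addsmx_sub (addsmxMr (f1 + f2)%MS f3 P2) addsmx_sub (addsmxMr f1 f2 P2) !addsmx_sub r1 r2 r3 h !submxMr.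
have rV4 : \rank (f1 + f2 + f3 + f4)%MS = 4%N.
  have := rank_step n2; have := rank_step n3; have := rank_step n4.
  have := rank_leq_col (f1 + f2 + f3 + f4)%MS.
  rewrite rank_rV f10; exact: arith3.
split=> //; first by rewrite /row_full rV4.
move=> z zw.
have rK : \rank (kermx w) = 5%N.
  have wT : w^T != 0 by rewrite trmx_eq0.
  by rewrite mxrank_ker -mxrank_tr rank_rV wT.
have sK : ((f1 + f2 + f3 + f4)%MS *m P1 + f4 *m P2 <= kermx w)%MS.
  by rewrite addsmx_sub !sub_kermx -!mulmxA P1w P2w !mulmx0 !eqxx.
have rE : \rank ((f1 + f2 + f3 + f4)%MS *m P1 + f4 *m P2)%MS = 5%N.
  have := rank_step n5; rewrite mxrankMfree ?P1free // rV4.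
  have := mxrankS sK; rewrite rK; exact: arith4.
have KE : (kermx w <= (f1 + f2 + f3 + f4)%MS *m P1 + f4 *m P2)%MS.
  by have := mxrank_leqif_sup sK => /leqifP; rewrite rE rK eqxx ltnn; case: ifP.
by apply: submx_trans KE; rewrite sub_kermx zw.
Qed.

Lemma tr11 (X : 'M[C]_1) : X^T = X.
Proof. by rewrite [X]mx11_scalar tr_scalar_mx. Qed.

Lemma sigma_anti (M : 'M[C]_4) (hM : M^T = - M) (x y : 'rV_4) :
  x *m M *m y^T = - (y *m M *m x^T).
Proof.
by rewrite -[LHS]tr11 !trmx_mul trmxK hM mulNmx mulmxN mulmxA.
Qed.

Lemma selfopp11 (X : 'M[C]_1) : X = - X -> X = 0.
Proof.
move=> h; apply/matrixP => a b; rewrite !ord1 !mxE.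
have := congr1 (fun M : 'M_1 => M 0 0) h; rewrite mxE => e.
have : X 0 0 *+ 2 = 0 by rewrite mulr2n {1}e addNr.
by move/eqP; rewrite mulrn_eq0 /= => /eqP.
Qed.

Variable Av : 'M[C]_(4,6).
Hypothesis A1 : (Av *m P1^T)^T = - (Av *m P1^T).
Hypothesis A2 : (Av *m P2^T)^T = - (Av *m P2^T).

Lemma K_main : forall z : 'rV_6, z *m w = 0 -> Av *m z^T = 0.
Proof.
have [f1 [f2 [f3 [f4 [r1 r2 r3 full spanE]]]]] := K_span.
pose F k := nth 0 [:: f1; f2; f3; f4] k.
pose E k := if (k < 4)%N then F k *m P1 else f4 *m P2.
have FE : forall j, (j < 4)%N -> F j *m P2 = E j.+1.
  by case=> [|[|[|[|j]]]].
pose s i j := F i *m Av *m (E j)^T.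
have S1 : forall x y : 'rV_4, x *m Av *m (y *m P1)^T = - (y *m Av *m (x *m P1)^T).
  by move=> x y; rewrite !trmx_mul !mulmxA -!(mulmxA _ Av) sigma_anti.
have S2 : forall x y : 'rV_4, x *m Av *m (y *m P2)^T = - (y *m Av *m (x *m P2)^T).
  by move=> x y; rewrite !trmx_mul !mulmxA -!(mulmxA _ Av) sigma_anti.
have hz : forall i j, (i < 4)%N -> (j < 5)%N -> s i j = 0.
  apply: hankel; first exact: selfopp11.
    by move=> i j hi hj; rewrite /s /E hi hj S1.
  by move=> i j hi hj; rewrite /s -!FE // S2.
have key : forall i, (i < 4)%N -> forall z : 'rV_6, z *m w = 0 -> F i *m (Av *m z^T) = 0.
  move=> i hi z zw.
  have T0 : forall j, (j < 5)%N -> E j *m (F i *m Av)^T == 0.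
    move=> j hj; apply/eqP.
    by rewrite -[E j]trmxK -trmx_mul -/(s i j) hz // trmx0.
  have sub : ((f1 + f2 + f3 + f4)%MS *m P1 + f4 *m P2 <= kermx (F i *m Av)^T)%MS.
    rewrite addsmx_sub (addsmxMr _ f4 P1) addsmx_sub (addsmxMr _ f3 P1) addsmx_sub.
    rewrite (addsmxMr f1 f2 P1) addsmx_sub !sub_kermx.
    by rewrite (T0 0%N isT) (T0 1%N isT) (T0 2%N isT) (T0 3%N isT) (T0 4%N isT).
  have := submx_trans (spanE z zw) sub; rewrite sub_kermx => /eqP h.
  have e : F i *m (Av *m z^T) = (z *m (F i *m Av)^T)^T by rewrite trmx_mul trmxK mulmxA.
  by rewrite e h trmx0.
move=> z zw.
have sub : ((f1 + f2 + f3 + f4)%MS <= kermx (Av *m z^T))%MS.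
  rewrite !addsmx_sub !sub_kermx.
  by rewrite (key 0%N isT z zw) (key 1%N isT z zw) (key 2%N isT z zw) (key 3%N isT z zw) !eqxx.
have := submx_trans (submx_full 1%:M full) sub; rewrite sub_kermx mul1mx.
by move/eqP.
Qed.

End K.

Section G.
Variable R : realType.
Local Notation C := (R[i]).


Lemma poly_nonroot (p : {poly C}) : p != 0 -> exists t, p.[t] != 0.
Proof.
move=> p0.
case: (boolP [forall i : 'I_(size p), p.[(i : nat)%:R] == 0]) => [/forallP H|].
  have H2 := max_poly_roots p0 (rs := [seq (i : nat)%:R | i <- iota 0 (size p)]).
  exfalso; move: H2; rewrite size_map size_iota ltnn; move=> H2; suff: false by []; apply: H2.
    apply/allP => x /mapP[k]; rewrite mem_iota add0n => /andP[_ kp] ->.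
    by rewrite /root (eqP (H (Ordinal kp))).
  rewrite map_inj_uniq ?iota_uniq //.
  by move=> a b /eqP; rewrite eqr_nat => /eqP.
by rewrite negb_forall => /existsP[i Hi]; exists (i : nat)%:R.
Qed.

Definition lpt (y z : pt R) (t : C) : pt R := fun i => y i + t * (z i - y i).

Lemma line_poly (p : {mpoly C[4]}) (y z : pt R) :
  exists P : {poly C}, forall t, P.[t] = p.@[lpt y z t].
Proof.
pose L (i : 'I_4) : {poly C} := (y i)%:P + 'X * (z i - y i)%:P.
exists (\sum_(m <- msupp p) (p@_m)%:P * \prod_(i < 4) (L i) ^+ (m i)).
move=> t; rewrite mevalE -horner_evalE rmorph_sum; apply: eq_bigr => m _.
rewrite rmorphM /= rmorph_prod horner_evalE hornerC; congr (_ * _).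
apply: eq_bigr => i _; rewrite rmorphXn /= horner_evalE /L.
by rewrite hornerD hornerM hornerX !hornerC.
Qed.


Definition Yk (k : nat) (l : pt R) : Prop :=
  nonzero_pt l /\ forall j : 'I_4, (k <= j)%N -> l j = 0.

Lemma Yk_closed k : proj_closed (Yk k).
Proof.
exists (fun p => exists j : 'I_4, (k <= j)%N /\ p = 'X_j); split.
  by move=> p [j [_ ->]]; exists 1%N; rewrite dhomogX; apply/mdeg1P; exists j.
move=> l; split=> [[nz H]|[nz H]]; split=> //.
  by move=> p [j [kj ->]]; rewrite mevalXU H.
by move=> j kj; rewrite -(H 'X_j) ?mevalXU //; exists j.
Qed.

Lemma lpt0 (y z : pt R) : lpt y z 0 =1 y.
Proof. by move=> i; rewrite /lpt mul0r addr0. Qed.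

Lemma lpt1 (y z : pt R) : lpt y z 1 =1 z.
Proof. by move=> i; rewrite /lpt mul1r addrC subrK. Qed.

Lemma witness (A : pt R -> Prop) (SA : {mpoly C[4]} -> Prop)
  (eA : forall l, A l <-> nonzero_pt l /\ forall p, SA p -> p.@[l] = 0) y :
  nonzero_pt y -> ~ A y -> exists p, SA p /\ p.@[y] != 0.
Proof.
move=> nz nA; apply: NNPP => H; apply: nA; apply/eA; split=> // p Sp.
by case: (eqVneq (p.@[y]) 0) => // ne; exfalso; apply: H; exists p.
Qed.

Lemma Yk_irr k : (0 < k)%N -> proj_irreducible (Yk k).
Proof.
move=> k0; split; first exact: Yk_closed.
  exists (fun i : 'I_4 => ((i : nat) == 0%N)%:R); split.
    by exists 0; rewrite eqxx oner_neq0.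
  by move=> j kj; have -> : ((j : nat) == 0%N) = false by apply/negbTE; rewrite -lt0n (leq_trans k0 kj).
move=> A B [SA [hA eA]] [SB [hB eB]] cov.
case: (classic (psubset (Yk k) A)) => [|nA]; first by left.
case: (classic (psubset (Yk k) B)) => [|nB]; first by right.
exfalso.
have [y Hy] := not_all_ex_not _ _ nA.
have [z Hz] := not_all_ex_not _ _ nB.
have Yy := not_imply_elim _ _ Hy; have nAy := not_imply_elim2 _ _ Hy.
have Yz := not_imply_elim _ _ Hz; have nBz := not_imply_elim2 _ _ Hz.
have [p [Sp py]] := witness eA Yy.1 nAy.
have [q [Sq qz]] := witness eB Yz.1 nBz.
have [i0 yi0] := Yy.1.
have [P HP] := line_poly p y z.
have [Q HQ] := line_poly q y z.
have [L HL] := line_poly 'X_i0 y z.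
have P0 : P != 0 by apply: contraNneq py => P0; rewrite -(meval_eq _ (lpt0 y z)) -HP P0 horner0.
have Q0 : Q != 0 by apply: contraNneq qz => Q0; rewrite -(meval_eq _ (lpt1 y z)) -HQ Q0 horner0.
have L0 : L != 0 by apply: contraNneq yi0 => L0; rewrite -(lpt0 y z i0) -mevalXU -HL L0 horner0.
have [t] := poly_nonroot (mulf_neq0 (mulf_neq0 P0 Q0) L0).
rewrite !hornerM !mulf_eq0 !negb_or => /andP[/andP[Pt Qt] Lt].
have Yx : Yk k (lpt y z t).
  split; first by exists i0; rewrite -mevalXU -HL.
  by move=> j kj; rewrite /lpt (Yy.2 j kj) (Yz.2 j kj) subrr mulr0 addr0.
case: (cov _ Yx) => [/eA [_ H]|/eB [_ H]].
  by move: Pt; rewrite HP H ?eqxx.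
by move: Qt; rewrite HQ H ?eqxx.
Qed.


Definition ept (k : nat) : pt R := fun i => ((i : nat) == k)%:R.

Lemma ept_nz (k : 'I_4) : nonzero_pt (ept k).
Proof. by exists k; rewrite /ept eqxx oner_neq0. Qed.

Lemma Yk_sub k1 k2 : (k1 <= k2)%N -> psubset (Yk k1) (Yk k2).
Proof. by move=> le l [nz H]; split=> // j kj; apply: H; apply: leq_trans kj. Qed.

Lemma ept_Yk (k : 'I_4) m : (k < m)%N -> Yk m (ept k).
Proof.
move=> km; split; first exact: ept_nz.
move=> j mj; rewrite /ept; case: eqP => // ejk.
by move: km; rewrite -ejk ltnNge mj.
Qed.

Lemma ept_nYk (k : 'I_4) m : (m <= k)%N -> ~ Yk m (ept k).
Proof. by move=> mk [_ H]; move: (H k mk); rewrite /ept eqxx => /eqP; rewrite oner_eq0. Qed.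

Lemma exists_good (Z : pt R -> Prop) : proj_codim_ge2 Z ->
  exists l, nonzero_pt l /\ ~ Z l.
Proof.
move=> hZ; apply: NNPP => H; apply: hZ.
exists (Yk 1), (Yk 2), (Yk 4); split; try (apply: Yk_irr; done).
split.
- split; first exact: Yk_sub.
  by exists (ept (@Ordinal 4 1 isT)); split; [apply: ept_Yk | apply: ept_nYk].
- split; first exact: Yk_sub.
  by exists (ept (@Ordinal 4 2 isT)); split; [apply: ept_Yk | apply: ept_nYk].
- move=> l [nz _]; apply: NNPP => nZ; apply: H; by exists l.
Qed.

End G.

Section L.
Variable R : realType.
Local Notation C := (R[i]).



Lemma nz_rv n (u : 'rV[C]_n) : u != 0 -> exists j, u 0 j != 0.
Proof.
move=> nz; apply: NNPP => H; case/negP: nz; apply/eqP/matrixP => a j.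
rewrite ord1 mxE; case: (eqVneq (u 0 j) 0) => // ne; exfalso; apply: H; by exists j.
Qed.

Lemma gs_colinj (g : 'I_4 -> 'M[C]_(6,2)) : globally_surjective g ->
  forall l, nonzero_pt l -> forall y : 'cV_2, lincomb l g *m y = 0 -> y = 0.
Proof.
move=> gs l nz y Hy; apply: NNPP => ny.
have [j yj] : exists j, y j 0 != 0.
  have yT : y^T != 0 by apply/negP => /eqP H; apply: ny; rewrite -(trmxK y) H trmx0.
  have [j Hj] := nz_rv yT.
  by exists j; rewrite mxE in Hj.
have [v Hv] := gs l nz (delta_mx 0 j).
have H1 : v *m lincomb l g *m y = delta_mx 0 j *m y by rewrite Hv.
rewrite -mulmxA Hy mulmx0 -rowE in H1.
by move: yj; have := congr1 (fun M : 'M_(1,1) => M 0 0) H1; rewrite !mxE => <-; rewrite eqxx.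
Qed.

Lemma lincomb_mul (l : pt R) m n p (h : 'I_4 -> 'M[C]_(m,n)) (y : 'M[C]_(n,p)) :
  lincomb l h *m y = lincomb l (fun i => h i *m y).
Proof. by rewrite /lincomb mulmx_suml; apply: eq_bigr => i _; rewrite scalemxAl. Qed.

Lemma L1 (g : 'I_4 -> 'M[C]_(6,2)) (S0 : 'M[C]_6) (S2 : 'M[C]_2) :
  globally_surjective g -> (forall i, (S0 *m g i <= S2)%MS) ->
  \rank S2 = 1%N -> (\rank S0 <= 2)%N.
Proof.
move=> gs sub r2; rewrite leqNgt; apply/negP => r0.
have [u [u0 uS]] : exists u : 'rV_2, u != 0 /\ u *m S2^T = 0.
  by apply: exists_ker; rewrite mxrank_tr r2.
pose y := u^T.
have S2y : S2 *m y = 0 by rewrite -(trmxK S2) -trmx_mul uS trmx0.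
pose Phi : 'M[C]_(6,4) := \matrix_(r, i) (g i *m y) r 0.
have SP : S0 *m Phi = 0.
  apply/matrixP => a i; rewrite !mxE.
  have [D HD] := submxP (sub i).
  have : (S0 *m g i *m y) a 0 = 0 by rewrite HD -mulmxA S2y mulmx0 mxE.
  rewrite -mulmxA mxE => H; apply: etrans H; apply: eq_bigr => r _; by rewrite mxE.
have rP : (\rank Phi^T < 4)%N.
  have := mulmx0_rank_max SP; rewrite mxrank_tr; move: r0; clear; lia.
have [w [w0 wP]] := exists_ker rP.
pose lp : pt R := fun i => w 0 i.
have nz : nonzero_pt lp by have [j Hj] := nz_rv w0; exists j.
have : lincomb lp g *m y = 0.
  apply/matrixP => r c; rewrite ord1 lincomb_mul /lincomb summxE mxE.
  have := congr1 (fun M : 'M_(1,6) => M 0 r) wP; rewrite !mxE => H; apply: etrans H.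
  by apply: eq_bigr => i _; rewrite !mxE.
move/(gs_colinj gs nz) => y0; case/negP: u0; by rewrite -(trmxK u) -/y y0 trmx0.
Qed.

End L.


Section Fin.
Variable R : realType.
Local Notation C := (R[i]).

Lemma perp_sub (a z : 'rV[C]_6) : z != 0 ->
  (forall z' : 'rV_6, z' *m z^T = 0 -> a *m z'^T = 0) -> (a <= z)%MS.
Proof.
move=> z0 H; have [k zk] := nz_rv z0.
apply/sub_rVP; exists (a 0 k / z 0 k); apply/rowP => j; rewrite mxE.
pose z' : 'rV_6 := z 0 k *: delta_mx 0 j - z 0 j *: delta_mx 0 k.
have h1 : z' *m z^T = 0.
  rewrite mulmxBl -!scalemxAl -!rowE; apply/matrixP => x y; rewrite !ord1 !mxE.
  by rewrite mulrC subrr.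
have := H z' h1; rewrite /z' linearB !linearZ /= !trmx_delta mulmxDr -!scalemxAr mulmxN -!colE.
move=> h2; have := congr1 (fun M : 'M_1 => M 0 0) h2; rewrite !mxE => e.
have e2 : z 0 k * a 0 j = z 0 j * a 0 k by apply/eqP; rewrite -subr_eq0 -mulrN e.
rewrite -[a 0 j](mulKf zk) e2; field; done.
Qed.

Lemma good_l0 (f : 'I_4 -> 'M[C]_(2,6)) : locally_injective f ->
  exists l, nonzero_pt l /\ injective (fun v : 'rV_2 => v *m lincomb l f).
Proof.
case=> Z [_ cZ inj]; have [l [nz nZ]] := exists_good cZ.
by exists l; split=> //; apply: inj.
Qed.

Lemma K0zero (f : 'I_4 -> 'M[C]_(2,6)) (g : 'I_4 -> 'M[C]_(6,2)) :
  is_Qrep f g -> globally_surjective g ->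
  (exists l, nonzero_pt l /\ injective (fun v : 'rV_2 => v *m lincomb l f)) ->
  forall z : 'rV_6, (forall i, z *m g i = 0) -> z = 0.
Proof.
move=> Q gs [l0 [nz0 inj0]] z zg; apply/eqP; apply: contraT => z0.
pose P (c : 'I_2) : 'M[C]_(4,6) := \matrix_(i, r) g i r c.
have H1 : forall (x : 'rV_4) (a b : C), x != 0 ->
    x *m (a *: P 0 + b *: P 1) = 0 -> (a == 0) && (b == 0).
  move=> x a b x0 hx.
  pose lx : pt R := fun i => x 0 i.
  have nzx : nonzero_pt lx by have [j hj] := nz_rv x0; exists j.
  pose y : 'cV[C]_2 := \col_k (if k == 0 then a else b).
  have : lincomb lx g *m y = 0.
    apply/matrixP => r c; rewrite ord1 lincomb_mul /lincomb summxE.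
    have := congr1 (fun M : 'M_(1,6) => M 0 r) hx; rewrite !mxE => h.
    apply: etrans h; apply: eq_bigr => i _; rewrite !mxE big_ord_recl big_ord1 !mxE /=.
    have e0 : (0 : 'I_2) = ord0 by apply: val_inj.
    have e1 : (1 : 'I_2) = lift ord0 ord0 by apply: val_inj.
    by rewrite e0 e1 /lx; ring.
  move/(gs_colinj gs nzx) => y0.
  have := congr1 (fun M : 'cV_2 => M 0 0) y0; have := congr1 (fun M : 'cV_2 => M 1 0) y0.
  by rewrite !mxE /= => -> ->; rewrite eqxx.
pose w := z^T.
have w0 : w != 0 by rewrite trmx_eq0.
have Pw : forall c, P c *m w = 0.
  move=> c; apply/matrixP => i j; rewrite ord1 !mxE.
  have := congr1 (fun M : 'M_(1,2) => M 0 c) (zg i); rewrite !mxE => h.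
  apply: etrans h; apply: eq_bigr => r _; by rewrite !mxE mulrC.
have rows : forall (v : 'rV_2) i, (v *m f i <= z)%MS.
  move=> v i.
  pose Av : 'M[C]_(4,6) := \matrix_(j, r) (v *m f j) 0 r.
  have Ac : forall c, (Av *m (P c)^T)^T = - (Av *m (P c)^T).
    move=> c; apply/matrixP => j k; rewrite !mxE.
    have h : v *m f k *m g j = - (v *m f j *m g k).
      by apply/eqP; rewrite -addr_eq0 -!mulmxA -mulmxDr Q mulmx0.
    have E1 : forall p q, \sum_r Av p r * (P c)^T r q = (v *m f p *m g q) 0 c.
      by move=> p q; rewrite !mxE; apply: eq_bigr => r _; rewrite !mxE.
    by rewrite (E1 k j) (E1 j k) h mxE.
  apply: perp_sub => // z' hz'.
  have := K_main H1 w0 (Pw 0) (Pw 1) (Ac 0) (Ac 1) (z := z').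
  move/(_ hz') => h.
  have -> : v *m f i = row i Av by apply/rowP => r; rewrite !mxE.
  by rewrite -row_mul h row0.
have sub : (lincomb l0 f <= z)%MS.
  apply/row_subP => j; rewrite rowE /lincomb mulmx_sumr summx_sub // => k _.
  by rewrite -scalemxAr scalemx_sub.
have rf : row_free (lincomb l0 f).
  apply: inj_row_free => v hv; apply: inj0; by rewrite /= hv mul0mx.
have := mxrankS sub; rewrite rank_rV z0.
by move: rf; rewrite -row_leq_rank => /leq_trans h /h.
Qed.


Lemma arith_final (r1 r0 r2 : nat) : (r1 <= 2)%N -> (r0 <= 6)%N -> (r2 <= 2)%N ->
  (r2 = 1%N -> (r0 <= 2)%N) -> (r2 = 0%N -> False) ->
  ((r1 < 2)%N \/ (r0 < 6)%N \/ (r2 < 2)%N) -> (r1 + 2 * r0 < 7 * r2)%N.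
Proof. lia. Qed.

Lemma theta_val (a b c : nat) :
  theta_dot ((1, 2), -7) a b c = (a + 2 * b)%:R - (7 * c)%:R :> R.
Proof. by rewrite /theta_dot /= natrD !natrM; ring. Qed.

Lemma zero_case (f : 'I_4 -> 'M[C]_(2,6)) (g : 'I_4 -> 'M[C]_(6,2))
  (S1 : 'M[C]_2) (S0 : 'M[C]_6) (S2 : 'M[C]_2) :
  is_Qrep f g -> globally_surjective g ->
  (exists l, nonzero_pt l /\ injective (fun v : 'rV_2 => v *m lincomb l f)) ->
  is_subrep f g S1 S0 S2 -> \rank S2 = 0%N -> S1 = 0 /\ S0 = 0.
Proof.
move=> Q gs l0 sub r2.
have S20 : S2 = 0 by apply/eqP; rewrite -mxrank_eq0 r2.
have S00 : S0 = 0.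
  apply/row_matrixP => j; rewrite row0; apply: (K0zero Q gs l0) => i.
  have := (sub i).2; rewrite S20 => /submx0null h.
  by rewrite -row_mul h row0.
split=> //.
have [l [nz inj]] := l0.
have h : S1 *m lincomb l f = 0.
  rewrite /lincomb mulmx_sumr; apply: big1 => i _.
  have := (sub i).1; rewrite S00 => /submx0null h.
  by rewrite -scalemxAr h scaler0.
apply/row_matrixP => j; rewrite row0; apply: inj => /=.
by rewrite -row_mul h row0 mul0mx.
Qed.

End Fin.

Unset Implicit Arguments.
Set Strict Implicit.

Theorem mainTheorem6 (R : realType) :
  exists th : R * R * R,
    theta_dot th 2 6 2 = 0 /\
    forall (f : 'I_4 -> 'M[R[i]]_(2, (2 * 2 + 2)%N))
           (g : 'I_4 -> 'M[R[i]]_((2 * 2 + 2)%N, 2)),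
      instanton_rep f g -> theta_stable th f g.
Proof.
exists ((1, 2), -7).
have t0 : theta_dot ((1, 2), -7) 2 6 2 = 0 :> R by rewrite theta_val subrr.
split=> // f g [Q li gs]; split=> //.
have l0 := good_l0 li.
move=> S1 S0 S2 sub nz pr.
rewrite theta_val subr_lt0 ltr_nat.
apply: arith_final.
- exact: rank_leq_row.
- exact: rank_leq_row.
- exact: rank_leq_row.
- by move=> r2; exact: (L1 gs (fun i => (sub i).2) r2).
- move=> r2; have [S10 S00] := zero_case Q gs l0 sub r2.
  by move: nz; rewrite S10 S00 r2 !mxrank0; case=> [|[]].
- exact: pr.
Qed.
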